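(* There exists an elliptic curve $E$ defined over $\mathbf{Q}$ with $S_{x,y}(E) \geq 5$; that is, there exist an elliptic curve $E/\mathbf{Q}$ and five distinct rational points $P_1,\dots,P_5 \in E(\mathbf{Q})$ such that their $x$-coordinates, in some order, form an arithmetic progression with nonzero common difference, and their $y$-coordinates, in some (possibly different) order, also form an arithmetic progression with nonzero common difference.
   Context: An elliptic curve over $\mathbf{Q}$ is given by a general Weierstrass equation $Y^2 + a_1XY + a_3Y = X^3 + a_2X^2 + a_4X + a_6$ with $a_i \in \mathbf{Q}$ and nonzero discriminant. Rational points $P_0,\dots,P_n\in E$ form a simultaneous arithmetic progression if their $x$-coordinates form an arithmetic progression (with nonzero difference) in some order and their $y$-coordinates form an arithmetic progression (with nonzero difference) in some, possibly different, order. $S_{x,y}(E)$ denotes the maximal number of rational points of $E$ forming a simultaneous arithmetic progression. *)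

(* Defs.v *)
From HB Require Import structures.
From mathcomp Require Import all_boot all_order all_fingroup all_algebra.
Set Implicit Arguments. Unset Strict Implicit. Unset Printing Implicit Defensive.
Import Order.TTheory GRing.Theory Num.Theory.
Local Open Scope ring_scope.

(* General Weierstrass equation Y^2 + a1 XY + a3 Y = X^3 + a2 X^2 + a4 X + a6
   over Q, given by its coefficient list (a1, a2, a3, a4, a6). *)
Record weierstrass := Weierstrass { a1 : rat; a2 : rat; a3 : rat; a4 : rat; a6 : rat }.

(* Standard discriminant (Silverman III.1). *)
Definition wdisc (E : weierstrass) : rat :=
  let b2 := a1 E ^+ 2 + 4 * a2 E in
  let b4 := 2 * a4 E + a1 E * a3 E in
  let b6 := a3 E ^+ 2 + 4 * a6 E in
  let b8 := a1 E ^+ 2 * a6 E + 4 * a2 E * a6 E - a1 E * a3 E * a4 E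
            + a2 E * a3 E ^+ 2 - a4 E ^+ 2 in
  - b2 ^+ 2 * b8 - 8 * b4 ^+ 3 - 27 * b6 ^+ 2 + 9 * b2 * b4 * b6.

Definition is_elliptic (E : weierstrass) : Prop := wdisc E != 0.

Definition on_curve (E : weierstrass) (P : rat * rat) : Prop :=
  P.2 ^+ 2 + a1 E * P.1 * P.2 + a3 E * P.2
  = P.1 ^+ 3 + a2 E * P.1 ^+ 2 + a4 E * P.1 + a6 E.

Definition is_AP_some_order (n : nat) (f : 'I_n -> rat) : Prop :=
  exists (s : 'S_n) (a d : rat), d != 0 /\ forall i : 'I_n, f (s i) = a + (val i)%:R * d.

Definition simultaneous_AP (n : nat) (P : 'I_n -> rat * rat) : Prop :=
  is_AP_some_order (fun i => (P i).1) /\ is_AP_some_order (fun i => (P i).2).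

(* Main.v *)
Require Import Defs.
From mathcomp Require Import all_boot all_order all_fingroup all_algebra.
From mathcomp Require Import ring lra.
Import GRing.Theory Num.Theory.
Local Open Scope ring_scope.

Definition Pt (i : 'I_5) : rat * rat :=
  ((val i)%:R, (nth 0%N [:: 0; 1; 4; 3; 2]%N (val i))%:R).

Lemma disc_nz : - ((797%:R : rat) / 4%:R) != 0.
Proof.
rewrite oppr_eq0; apply: mulf_neq0; first by rewrite pnatr_eq0.
by rewrite invr_eq0 pnatr_eq0.
Qed.

Theorem theorem2 :
  exists (E : weierstrass) (P : 'I_5 -> rat * rat),
    is_elliptic E /\
    injective P /\
    (forall i, on_curve E (P i)) /\
    simultaneous_AP P.
Proof.
exists (Weierstrass (-5/2) (-11/2) (-2) 1 0), Pt.
split.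
  rewrite /is_elliptic.
  have -> : wdisc (Weierstrass (-5/2) (-11/2) (-2) 1 0) = - (797%:R / 4%:R) :> rat.
    by rewrite /wdisc /=; field.
  exact: disc_nz.
split.
  move=> i j; rewrite /Pt => -[] /eqP + _.
  by rewrite eqr_nat => /eqP H; apply: val_inj.
split.
  move=> [[|[|[|[|[|i]]]]] Hi] //; rewrite /on_curve /Pt /=; field.
split.
  exists 1%g, 0, 1; split => // i; by rewrite perm1 /Pt /= add0r mulr1.
exists (tperm (@Ordinal 5 2 isT) (@Ordinal 5 4 isT)), 0, 1; split => //.
by move=> [[|[|[|[|[|i]]]]] Hi] //; rewrite add0r mulr1 /tperm permE /=.
Qed.
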